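(* Let $\alpha<_c\beta$ with $\beta/\!\!/\alpha$ an nc border strip with $n$ boxes, and let $w\in CRHW_n$ satisfy $w(\alpha)=\beta$. If $j\in E(\beta/\!\!/\alpha)$, then $j\in\mathrm{leg}(w)$.
   Context: A composition is a finite sequence $\alpha=(\alpha_1,\dots,\alpha_k)$ of positive integers; $\ell(\alpha)=k$; its diagram is the set of boxes $(i,j)$, $1\le i\le\ell(\alpha)$, $1\le j\le\alpha_i$, rows top to bottom, columns left to right. For compositions $\gamma=(\gamma_1,\dots,\gamma_l)$, $\delta$ write $\gamma\lessdot_c\delta$ if $\delta=(1,\gamma_1,\dots,\gamma_l)$ or $\delta=(\gamma_1,\dots,\gamma_k+1,\dots,\gamma_l)$ with $\gamma_i\ne\gamma_k$ for all $i<k$; $<_c$ is the transitive closure. For $\gamma<_c\delta$, $\delta/\!\!/\gamma$ consists of the boxes of $\delta$ other than $(\ell(\delta)-\ell(\gamma)+i,j)$, $1\le i\le\ell(\gamma)$, $1\le j\le\gamma_i$. $\mathrm{supp}(\beta/\!\!/\alpha)$ is the set of columns containing a box of $\beta/\!\!/\alpha$; interval shape: supp is a set of consecutive integers. nc border strip: an interval shape such that (1) if $(i,1),(i,2)\in\beta/\!\!/\alpha$ then $(i,1)$ is the bottommost box of column 1 of $\beta/\!\!/\alpha$, and (2) if $(i,j),(i,j+1)\in\beta/\!\!/\alpha$ with $j\ge2$ then $(i,j)$ is the topmost box of column $j$ of $\beta/\!\!/\alpha$. $E(\beta/\!\!/\alpha)$ is the set of $j$ such that $(i,j),(i,j+1)\in\beta/\!\!/\alpha$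 for some $i$. Box-adding operators: $\mathfrak t_1(\alpha)=(1,\alpha_1,\dots,\alpha_k)$; for $i\ge2$, $\mathfrak t_i(\alpha)$ increases the leftmost part equal to $i-1$ by $1$, and is $0$ if none; $\mathfrak t_i(0)=0$. A word $w=\mathfrak t_{i_1}\cdots\mathfrak t_{i_n}$ acts by $w(\alpha)=\mathfrak t_{i_1}(\cdots\mathfrak t_{i_n}(\alpha))$; it is a reverse $k$-hookword if $i_1\le\cdots\le i_{k+1}>i_{k+2}>\cdots>i_n$, with $\mathrm{leg}(w)=\{i_{k+1},\dots,i_n\}$; connected if $\{i_1,\dots,i_n\}$ is a set of consecutive integers; $CRHW_n$ is the set of connected reverse hookwords of length $n$. *)

(* Defs.v *)
From mathcomp Require Import all_boot.
Set Implicit Arguments. Unset Strict Implicit. Unset Printing Implicit Defensive.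

(* A composition is a seq nat with all parts positive. Parts are 1-indexed
   in the paper: alpha_i = nth 0 alpha i.-1. *)
Definition is_composition (a : seq nat) : bool := all (fun x => 0 < x) a.

Definition cover_c (g d : seq nat) : Prop :=
  d = 1 :: g \/
  exists k, k < size g /\ d = set_nth 0 g k (nth 0 g k).+1 /\
            (forall i, i < k -> nth 0 g i <> nth 0 g k).

Inductive lt_c : seq nat -> seq nat -> Prop :=
| lt_c_step g d : cover_c g d -> lt_c g d
| lt_c_trans g d e : lt_c g d -> lt_c d e -> lt_c g e.

Definition in_skew (d g : seq nat) (i j : nat) : bool :=
  let l := size d - size g in
  [&& 1 <= i, i <= size d, 1 <= j, j <= nth 0 d i.-1 &
      ~~ ((l < i) && (j <= nth 0 g (i - l).-1))].

Definition in_supp (d g : seq nat) (j : nat) : bool :=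
  has (fun i => in_skew d g i j) (iota 1 (size d)).

Definition interval_shape (d g : seq nat) : Prop :=
  forall j1 j2 j3, j1 <= j2 -> j2 <= j3 ->
    in_supp d g j1 -> in_supp d g j3 -> in_supp d g j2.

Definition nc_border_strip (d g : seq nat) : Prop :=
  interval_shape d g /\
  (forall i, in_skew d g i 1 -> in_skew d g i 2 ->
     forall i', in_skew d g i' 1 -> i' <= i) /\
  (forall i j, 2 <= j -> in_skew d g i j -> in_skew d g i j.+1 ->
     forall i', in_skew d g i' j -> i <= i').

Definition skew_size (d g : seq nat) : nat :=
  sumn [seq count (fun j => in_skew d g i j) (iota 1 (nth 0 d i.-1))
       | i <- iota 1 (size d)].

Definition in_E (d g : seq nat) (j : nat) : Prop :=
  exists i, in_skew d g i j /\ in_skew d g i j.+1.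

(* box-adding operators; None plays the role of 0 *)
Definition t_op (i : nat) (a : seq nat) : option (seq nat) :=
  match i with
  | 0 => None
  | 1 => Some (1 :: a)
  | i'.+1 => let k := index i' a in
             if k < size a then Some (set_nth 0 a k i'.+1) else None
  end.

(* word w = t_{i_1} ... t_{i_n} represented as [:: i_1; ...; i_n];
   w(alpha) = t_{i_1}( ... t_{i_n}(alpha)) *)
Definition word_act (w : seq nat) (a : seq nat) : option (seq nat) :=
  foldr (fun i acc => obind (t_op i) acc) (Some a) w.

(* w is a reverse k-hookword: i_1 <= ... <= i_{k+1} > i_{k+2} > ... > i_n
   (0-indexed: positions 0..k weakly increasing, positions k..n-1 strictly
   decreasing); leg(w) = {i_{k+1},...,i_n} = drop k w *)
Definition rev_hookword (k : nat) (w : seq nat) : Prop :=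
  k < size w /\ all (fun i => 0 < i) w /\
  (forall a, a < k -> nth 0 w a <= nth 0 w a.+1) /\
  (forall a, k <= a -> a.+1 < size w -> nth 0 w a.+1 < nth 0 w a).

Definition leg (k : nat) (w : seq nat) : seq nat := drop k w.

Definition connected_word (w : seq nat) : Prop :=
  forall x y z, x <= y -> y <= z -> x \in w -> z \in w -> y \in w.

(* Main.v *)
Require Import Defs.
From mathcomp Require Import all_boot.
From mathcomp Require Import zify.
Set Implicit Arguments.

Definition Vr (a : seq nat) (s : nat) := nth 0 (rev a) s.

Lemma step_lem x a b : t_op x a = Some b ->
  0 < x /\ exists r, Vr a r = x.-1 /\ Vr b r = x /\
     forall s, s != r -> Vr b s = Vr a s.
Proof.
case: x => [|[|x]] //=.
- case=> <-; split=> //; exists (size a); rewrite /Vr rev_cons.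
  rewrite nth_rcons size_rev ltnn eqxx nth_default ?size_rev //; split=> //; split=> //.
  move=> s ne; rewrite nth_rcons size_rev (negbTE ne).
  case: ifP => // H; rewrite nth_default // size_rev; lia.
- case: ifP => // Hk [<-]; split=> //.
  set k := index x.+1 a in Hk *.
  have Hs : size (set_nth 0 a k x.+2) = size a by rewrite size_set_nth; lia.
  exists (size a - k.+1); rewrite /Vr.
  rewrite !nth_rev ?Hs; try lia.
  have -> : size a - (size a - k.+1).+1 = k by lia.
  rewrite nth_set_nth /= eqxx nth_index //; last by rewrite -index_mem.
  split=> //; split=> // s ne.
  case: (ltnP s (size a)) => Hs2.
  + rewrite !nth_rev ?Hs // nth_set_nth /=.
    case: ifP => // /eqP E; exfalso; move/eqP: ne; lia.
  + by rewrite !nth_default ?size_rev ?Hs.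
Qed.

Lemma act_cons x w a : word_act (x :: w) a = obind (t_op x) (word_act w a).
Proof. by []. Qed.

Lemma act_cat u v a b : word_act (u ++ v) a = Some b ->
  exists c, word_act v a = Some c /\ word_act u c = Some b.
Proof.
rewrite /word_act foldr_cat.
case: (foldr _ _ v) => [c|]; first by exists c.
suff -> : foldr (fun i acc => obind (t_op i) acc) None u = None by [].
by elim: u => //= x u ->.
Qed.

Lemma size_act w a b : word_act w a = Some b -> size a <= size b.
Proof.
elim: w b => [|x w IH] b; first by case=> ->.
rewrite act_cons; case E: (word_act w a) => [c|] //= Ht.
apply: leq_trans (IH _ E) _.
move: Ht; case: x => [|[|x]] //=; first by case=> <-.
case: ifP => // _ [<-]; rewrite size_set_nth; lia.
Qed.

Lemma legB j v a c : j \notin v -> word_act v a = Some c ->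
  forall s, Vr a s < j -> Vr c s < j.
Proof.
elim: v c => [|x v IH] c Hj; first by case=> ->.
rewrite act_cons; case E: (word_act v a) => [c'|] //= Ht.
move: Hj; rewrite in_cons negb_or => /andP [/eqP Hxj Hj].
have [xpos [r [H1 [H2 H3]]]] := @step_lem _ _ _ Ht.
move=> s Hs; have := IH c' Hj E s Hs.
case: (eqVneq s r) => [->|ne]; last by rewrite H3.
rewrite H1 H2; lia.
Qed.

Lemma armA u c b : sorted leq u -> word_act u c = Some b ->
  forall s, Vr b s = Vr c s \/ (Vr b s = (Vr c s).+1 /\ Vr b s \in u).
Proof.
elim: u b => [|x u IH] b; first by move=> _ [->] s; left.
move=> Hsort; rewrite act_cons; case E: (word_act u c) => [b'|] //= Ht.
have [xpos [r [H1 [H2 H3]]]] := @step_lem _ _ _ Ht.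
have Hall : all (leq x) u := order_path_min leq_trans Hsort.
have IH' := IH b' (path_sorted Hsort) E.
move=> s; case: (eqVneq s r) => [->|ne].
- rewrite H2; case: (IH' r) => [Heq|[Heq Hin]].
  + right; split; first lia. by rewrite in_cons eqxx.
  + exfalso; have := allP Hall _ Hin; rewrite H1; lia.
- rewrite H3 //; case: (IH' s) => [->|[-> Hin]]; first by left.
  by right; split=> //; rewrite in_cons Hin orbT.
Qed.

Theorem mainTheorem12 (n : nat) (alpha beta : seq nat) (k : nat) (w : seq nat) (j : nat) :
  is_composition alpha ->
  lt_c alpha beta ->
  nc_border_strip beta alpha ->
  skew_size beta alpha = n ->
  size w = n -> rev_hookword k w -> connected_word w ->
  word_act w alpha = Some beta ->
  in_E beta alpha j ->
  j \in leg k w.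
Proof.
move=> _ _ _ _ _ [Hk [_ [Hinc _]]] _ Hact [i [Hs1 Hs2]].
apply/idPn => Hj.
have Hsort : sorted leq (take k w).
  apply/(sortedP 0) => a Ha; rewrite size_take in Ha.
  have Ha' : a.+1 < k by rewrite Hk in Ha.
  rewrite !nth_take; [apply: Hinc| |]; lia.
move: Hact; rewrite -(cat_take_drop k w) => Hact.
have [g [Hv Hu]] := @act_cat _ _ _ _ Hact.
have Hsz := @size_act _ _ _ Hact.
move: Hs1 Hs2; rewrite /in_skew => /and5P [Hi1 Hi2 Hj1 Hj2 Hn] /and5P [_ _ _ Hj3 _].
set s := size beta - i.
have Hb : Vr beta s = nth 0 beta i.-1.
  by rewrite /Vr nth_rev; [congr nth; lia | lia].
have Ha : Vr alpha s < j.
  case: (ltnP s (size alpha)) => Hsa.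
  - rewrite /Vr nth_rev //.
    have Hl : size beta - size alpha < i by lia.
    move: Hn; rewrite Hl /= -ltnNge.
    by have -> : size alpha - s.+1 = (i - (size beta - size alpha)).-1 by lia.
  - by rewrite /Vr nth_default ?size_rev //; lia.
have Hg := @legB j _ _ _ Hj Hv s Ha.
case: (@armA _ _ _ Hsort Hu s) => [E|[E _]]; lia.
Qed.
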